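(* Let $G$ be a simple graph on $n$ vertices with $cM_2(G)\ge cM_2(H)$ for every simple graph $H$ on $n$ vertices, and let $F$, $X$, $Y$, $N^-_F$ be as defined in the context. Let $v\in Y$ with $N^-_F(v)\subseteq X$. Then for every $u\in X$ with $uv\in E(G)$, the arc $\overrightarrow{uv}$ belongs to $F$.
   Context: All graphs are finite and simple; $d_G(u)$ is the degree of $u$ and $cM_2(G)=\sum_{uv\in E(G)}|d_G(u)^2-d_G(v)^2|$. The canonical mixed graph $F$ of $G$ has vertex set $V(G)$; for each edge $uv\in E(G)$: if $d_G(u)>d_G(v)$ then $F$ contains the arc $\overrightarrow{uv}$, and if $d_G(u)=d_G(v)$ then $F$ contains the undirected edge $uv$. $d^+_F(u)$ (resp. $d^-_F(u)$) is the number of arcs of $F$ with tail (resp. head) $u$; $N^+_F(u)=\{w:\overrightarrow{uw}\in A(F)\}$ and $N^-_F(u)=\{w:\overrightarrow{wu}\in A(F)\}$. $X=\{u\in V(G): d^+_F(u)\ge d^-_F(u)\}$ and $Y=\{u\in V(G): d^+_F(u)< d^-_F(u)\}$. *)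

(* Defs.v *)
From mathcomp Require Import all_boot.
Set Implicit Arguments. Unset Strict Implicit. Unset Printing Implicit Defensive.

Definition simple_graph (n : nat) (e : rel 'I_n) : Prop :=
  symmetric e /\ irreflexive e.

Definition deg (n : nat) (e : rel 'I_n) (u : 'I_n) : nat := #|[set w | e u w]|.

Definition natdist (a b : nat) : nat := (a - b) + (b - a).

Definition cM2 (n : nat) (e : rel 'I_n) : nat :=
  \sum_(u : 'I_n) \sum_(v : 'I_n | (u < v) && e u v)
     natdist (deg e u ^ 2) (deg e v ^ 2).

Definition arcF (n : nat) (e : rel 'I_n) (u v : 'I_n) : bool :=
  e u v && (deg e v < deg e u).

Definition outdegF (n : nat) (e : rel 'I_n) (u : 'I_n) : nat :=
  #|[set w | arcF e u w]|.
Definition indegF (n : nat) (e : rel 'I_n) (u : 'I_n) : nat :=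
  #|[set w | arcF e w u]|.

Definition inNbF (n : nat) (e : rel 'I_n) (u : 'I_n) : {set 'I_n} :=
  [set w | arcF e w u].

Definition Xset (n : nat) (e : rel 'I_n) : {set 'I_n} :=
  [set u | indegF e u <= outdegF e u].
Definition Yset (n : nat) (e : rel 'I_n) : {set 'I_n} :=
  [set u | outdegF e u < indegF e u].

(* Main.v *)
Require Import Defs.
From mathcomp Require Import all_boot all_order all_algebra zify.
Import Order.TTheory GRing.Theory Num.Theory.
Set Implicit Arguments. Unset Strict Implicit. Unset Printing Implicit Defensive.
Local Open Scope ring_scope.

Definition b2i (b : bool) : int := if b then 1 else 0.

Lemma sqle (a b : nat) : (a <= b)%N -> (a * a <= b * b)%N.
Proof. by move=> h; apply: leq_mul. Qed.
Arguments sqle {a b}.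

Lemma inc_lb (x y : nat) :
  (2 * x%:Z + 1) * (b2i (y < x)%N - b2i (x < y)%N) <=
  (natdist (x.+1 ^ 2) (y ^ 2))%:Z - (natdist (x ^ 2) (y ^ 2))%:Z.
Proof.
rewrite /natdist /b2i -!mulnn; case: (ltngtP x y) => h.
- have h1 := sqle h.
  have h2 := sqle (ltnW h).
  nia.
- have h1 : (y * y <= x.+1 * x.+1)%N by apply: sqle; lia.
  have h2 := sqle (ltnW h).
  nia.
- subst y. nia.
Qed.

Lemma dec_lb (x y : nat) : (0 < x)%N ->
  (2 * x%:Z - 1) * (b2i (x < y)%N + b2i (y == x) - b2i (y < x)%N) <=
  (natdist (x.-1 ^ 2) (y ^ 2))%:Z - (natdist (x ^ 2) (y ^ 2))%:Z.
Proof.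
case: x => // x _; rewrite /natdist /b2i /= -!mulnn; case: (ltngtP x.+1 y) => h.
- have h1 : (x * x <= y * y)%N by apply: sqle; lia.
  have h2 := sqle (ltnW h).
  nia.
- have h2 := sqle (ltnW h).

  case: (leqP y x) => h3.
  + have h1 := sqle h3. nia.
  + have : y = x.+1 by lia. lia.
- nia.
Qed.

Lemma card_sum_int (T : finType) (P : pred T) :
  (#|[set b | P b]|)%:Z = \sum_b b2i (P b).
Proof.
rewrite -sum1_card -natz natr_sum big_mkcond /=.
by apply: eq_bigr => b _; rewrite inE /b2i; case: (P b).
Qed.

Definition Tn n (h : rel 'I_n) (a b : 'I_n) : nat :=
  if h a b then natdist (deg h a ^ 2) (deg h b ^ 2) else 0%N.

Lemma twice_cM2 n (h : rel 'I_n) : simple_graph h ->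
  (2 * cM2 h = \sum_a \sum_b Tn h a b)%N.
Proof.
move=> [hs hi].
have row : forall a, (\sum_b Tn h a b =
   \sum_(b : 'I_n | (a < b)%N) Tn h a b + \sum_(b : 'I_n | (b < a)%N) Tn h a b)%N.
  move=> a; rewrite (bigID (fun b : 'I_n => (a < b)%N)) /=; congr (_ + _)%N.
  rewrite (bigID (fun b : 'I_n => (b < a)%N)) /= [X in (_ + X)%N]big1 ?addn0.
    by apply: eq_bigl => b; case: (ltngtP a b).
  move=> b /andP[h1 h2]; have -> : b = a.
    by apply: val_inj; move: h1 h2; case: (ltngtP a b).
  by rewrite /Tn hi.
under eq_bigr => a _ do rewrite row.
rewrite big_split /=.
have -> : (\sum_(a : 'I_n) \sum_(b : 'I_n | (b < a)%N) Tn h a b =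
           \sum_(a : 'I_n) \sum_(b : 'I_n | (a < b)%N) Tn h a b)%N.
  rewrite (eq_bigr (fun a : 'I_n => \sum_(b : 'I_n) if (b < a)%N then Tn h a b else 0%N));
    last by move=> a _; rewrite big_mkcond.
  rewrite exchange_big /=; apply: eq_bigr => a _; rewrite [RHS]big_mkcond /=.
  apply: eq_bigr => b _; case: ifP => // _.
  by rewrite /Tn hs /natdist addnC.
rewrite addnn -mul2n; congr (2 * _)%N; rewrite /cM2.
apply: eq_bigr => a _; rewrite big_mkcondr /=.
by apply: eq_bigr => b _; rewrite /Tn.
Qed.

Section Tg.
Variables (n : nat) (e : rel 'I_n) (p q : 'I_n).

Definition tg : rel 'I_n := fun a b =>
  if ((a == p) && (b == q)) || ((a == q) && (b == p)) then ~~ e a b else e a b.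

Hypothesis pq : p != q.

Lemma tg_simple : simple_graph e -> simple_graph tg.
Proof.
move=> [hs hi]; split.
  by move=> a b; rewrite /tg hs (andbC (b == p)) (andbC (b == q)) orbC.
move=> a; rewrite /tg hi; case: ifP => //.
case/orP => /andP[/eqP -> /eqP h]; by move: pq; rewrite h eqxx.
Qed.

Lemma tg_out a b : a != p -> a != q -> tg a b = e a b.
Proof. by move=> ap aq; rewrite /tg (negbTE ap) (negbTE aq). Qed.

Lemma deg_tg_out a : a != p -> a != q -> deg tg a = deg e a.
Proof.
by move=> ap aq; rewrite /deg; apply: eq_card => b; rewrite !inE tg_out.
Qed.

Lemma tg_pb b : b != q -> tg p b = e p b.
Proof. by move=> bq; rewrite /tg eqxx (negbTE bq) (negbTE pq). Qed.

Lemma tg_qb b : b != p -> tg q b = e q b.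
Proof. by move=> bp; rewrite /tg eqxx (negbTE bp) eq_sym (negbTE pq). Qed.

Lemma tg_pq : tg p q = ~~ e p q.
Proof. by rewrite /tg !eqxx. Qed.

Lemma tg_qp : tg q p = ~~ e q p.
Proof. by rewrite /tg !eqxx orbT. Qed.

Lemma deg_tg_p : deg tg p = if e p q then (deg e p).-1 else (deg e p).+1.
Proof.
rewrite /deg; case epq: (e p q).
  have -> : [set b | tg p b] = [set b | e p b] :\ q.
    apply/setP => b; rewrite !inE; case: (eqVneq b q) => [->|bq].
      by rewrite tg_pq epq.
    by rewrite tg_pb.
  by rewrite [in RHS](cardsD1 q) inE epq.
have -> : [set b | tg p b] = q |: [set b | e p b].
  apply/setP => b; rewrite !inE; case: (eqVneq b q) => [->|bq].
    by rewrite tg_pq epq.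
  by rewrite tg_pb.
by rewrite cardsU1 inE epq.
Qed.

End Tg.

Lemma tgC n (e : rel 'I_n) p q a b : tg e p q a b = tg e q p a b.
Proof. by rewrite /tg orbC. Qed.

Lemma deg_tgC n (e : rel 'I_n) p q a : deg (tg e p q) a = deg (tg e q p) a.
Proof. by rewrite /deg; apply: eq_card => b; rewrite !inE tgC. Qed.

Section Sums.
Variable n : nat.

Lemma sum_split2 (f : 'I_n -> int) (p q : 'I_n) : p != q ->
  \sum_b f b = f p + f q + \sum_(b | (b != p) && (b != q)) f b.
Proof.
move=> pq; rewrite (bigD1 p) //= (bigD1 q) //=; last by rewrite eq_sym.
rewrite addrA; congr (_ + _); apply: eq_bigl => b; by rewrite andbC.
Qed.

Lemma row_lb (f c : 'I_n -> int) (p q : 'I_n) : p != q ->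
  (forall b, b != p -> b != q -> c b <= f b) ->
  f p + f q + \sum_b c b - c p - c q <= \sum_b f b.
Proof.
move=> pq H; rewrite (sum_split2 f pq) (sum_split2 c pq).
have : \sum_(b | (b != p) && (b != q)) c b <= \sum_(b | (b != p) && (b != q)) f b.
  by apply: ler_sum => b /andP[h1 h2]; apply: H.
lia.
Qed.

Lemma double_split (F : 'I_n -> 'I_n -> int) (p q : 'I_n) : p != q ->
  (forall a b, a != p -> a != q -> b != p -> b != q -> F a b = 0) ->
  (forall a b, F a b = F b a) -> F p p = 0 -> F q q = 0 ->
  \sum_a \sum_b F a b = 2 * \sum_b F p b + 2 * \sum_b F q b - 2 * F p q.
Proof.
move=> pq H0 HS Hp Hq.
rewrite [LHS](sum_split2 _ pq).
have -> : \sum_(a | (a != p) && (a != q)) \sum_b F a b =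
          \sum_(a | (a != p) && (a != q)) F p a + \sum_(a | (a != p) && (a != q)) F q a.
  rewrite -big_split /=; apply: eq_bigr => a /andP[ap aq].
  rewrite (sum_split2 _ pq) big1 ?addr0 ?(HS a p) ?(HS a q) //.
  by move=> b /andP[bp bq]; apply: H0.
rewrite (sum_split2 (F p) pq) (sum_split2 (F q) pq).
rewrite (HS q p) Hp Hq. lia.
Qed.

End Sums.

Section Main.
Variables (n : nat) (e : rel 'I_n).
Hypothesis hse : symmetric e.
Hypothesis hie : irreflexive e.

Lemma Tn_sym (h : rel 'I_n) : symmetric h -> forall a b, Tn h a b = Tn h b a.
Proof. by move=> hs a b; rewrite /Tn hs /natdist addnC. Qed.

Lemma S_eq (h : rel 'I_n) : simple_graph h ->
  (2 * cM2 h)%N%:Z = \sum_a \sum_b (Tn h a b)%:Z.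
Proof.
move=> sh; rewrite twice_cM2 // -natz natr_sum; apply: eq_bigr => a _.
by rewrite natr_sum; apply: eq_bigr => b _; rewrite natz.
Qed.

Definition Gf (h : rel 'I_n) a b : int := (Tn h a b)%:Z - (Tn e a b)%:Z.

Lemma Tn_tgC p q a b : Tn (tg e p q) a b = Tn (tg e q p) a b.
Proof. by rewrite /Tn tgC !(deg_tgC e p q). Qed.

Lemma diff_tg p q : p != q ->
  \sum_a \sum_b (Tn (tg e p q) a b)%:Z - \sum_a \sum_b (Tn e a b)%:Z =
  2 * \sum_b Gf (tg e p q) p b + 2 * \sum_b Gf (tg e p q) q b
  - 2 * Gf (tg e p q) p q.
Proof.
move=> pq; have [hsH hiH] := tg_simple pq (conj hse hie).
rewrite -sumrB.
under eq_bigr => a _ do rewrite -sumrB.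
apply: (double_split (F := Gf (tg e p q))) => //.
- move=> a b ap aq bp bq; rewrite /Gf /Tn tg_out // !deg_tg_out //.
  by rewrite subrr.
- by move=> a b; rewrite /Gf (Tn_sym hsH) (Tn_sym hse).
- by rewrite /Gf /Tn hiH hie subrr.
- by rewrite /Gf /Tn hiH hie subrr.
Qed.

Lemma deg_part x : (deg e x)%:Z =
  (indegF e x)%:Z + (outdegF e x)%:Z + #|[set b | e x b && (deg e b == deg e x)]|%:Z.
Proof.
rewrite /deg /indegF /outdegF !card_sum_int -!big_split /=.
apply: eq_bigr => b _; rewrite /arcF (hse b x) /b2i.
case: (e x b) => //=; case: (ltngtP (deg e x) (deg e b)) => //=.
Qed.

Definition cA p b : int :=
  (2 * (deg e p)%:Z + 1) * (b2i (arcF e p b) - b2i (arcF e b p)).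

Lemma sum_cA p : \sum_b cA p b =
  (2 * (deg e p)%:Z + 1) * ((outdegF e p)%:Z - (indegF e p)%:Z).
Proof.
by rewrite -mulr_sumr sumrB /outdegF /indegF !card_sum_int.
Qed.

Lemma row_inc p q : p != q -> ~~ e p q -> (indegF e p <= outdegF e p)%N ->
  Gf (tg e p q) p q <= \sum_b Gf (tg e p q) p b.
Proof.
move=> pq epq hX.
have := row_lb (f := Gf (tg e p q) p) (c := cA p) pq.
have hpp : cA p p = 0 by rewrite /cA /arcF hie /= subrr mulr0.
have hpq : cA p q = 0 by rewrite /cA /arcF (hse q p) (negbTE epq) /= subrr mulr0.
have hGpp : Gf (tg e p q) p p = 0.
  have [_ hiH] := tg_simple pq (conj hse hie).
  by rewrite /Gf /Tn hiH hie subrr.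
rewrite hpp hpq hGpp sum_cA.
have hC : 0 <= (2 * (deg e p)%:Z + 1) * ((outdegF e p)%:Z - (indegF e p)%:Z).
  apply: mulr_ge0; lia.
move=> H; apply: le_trans (H _); first lia.
move=> b bp bq; rewrite /cA /Gf /Tn (tg_pb e pq bq) (deg_tg_out e bp bq) (deg_tg_p e pq) (negbTE epq).
rewrite /arcF (hse b p); case: (e p b) => /=.
  exact: inc_lb.
by rewrite subrr mulr0.
Qed.

End Main.
Lemma arith1 (x y ip op tp iq oq tq : int) :
  0 <= ip -> 0 <= op -> 0 <= tp -> 0 <= iq -> 0 <= oq -> 0 <= tq ->
  x = ip + op + tp -> y = iq + oq + tq -> op < ip -> iq <= oq -> y < x ->
  ip + 1 <= iq ->
  0 < 2 * (- (x * x - y * y)) + 2 * ((2 * x - 1) * (ip + tp - op) + (2 * x - 1))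
      + 2 * ((2 * y - 1) * (iq + tq - oq) - (2 * y - 1)).
Proof.
move=> h1 h2 h3 h4 h5 h6 hx hy h7 h8 h9 h10.
have k1 : x - 2 * ip + 3 <= ip + tp - op + 1 by lia.
have k2 : 2 * ip + 1 - y <= iq + tq - oq - 1 by lia.
have k3 : (2 * x - 1) * (x - 2 * ip + 3) <= (2 * x - 1) * (ip + tp - op + 1).
  apply: ler_wpM2l; lia.
have k4 : (2 * y - 1) * (2 * ip + 1 - y) <= (2 * y - 1) * (iq + tq - oq - 1).
  apply: ler_wpM2l; lia.
have k5 : 0 <= (x - y) * (y - 2 - 2 * ip) by apply: mulr_ge0; lia.
nia.
Qed.

Lemma arith0 (x ip op tp iq oq tq : int) :
  0 <= ip -> 0 <= op -> 0 <= tp -> 0 <= iq -> 0 <= oq -> 0 <= tq ->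
  x = ip + op + tp -> x = iq + oq + tq -> op < ip -> iq <= oq ->
  ip <= iq -> 1 <= tq ->
  0 < 2 * ((2 * x - 1) * (ip + tp - op) - (2 * x - 1))
      + 2 * ((2 * x - 1) * (iq + tq - oq) - (2 * x - 1)).
Proof.
move=> h1 h2 h3 h4 h5 h6 hx hy h7 h8 h9 h10.
have k : 0 < (2 * x - 1) * (ip + tp - op + iq + tq - oq - 2).
  apply: mulr_gt0; lia.
nia.
Qed.

Section Main2.
Variables (n : nat) (e : rel 'I_n).
Hypothesis hse : symmetric e.
Hypothesis hie : irreflexive e.

Definition tie p := #|[set b | e p b && (deg e b == deg e p)]|.

Definition cB p b : int :=
  (2 * (deg e p)%:Z - 1) *
  (b2i (arcF e b p) + b2i (e p b && (deg e b == deg e p)) - b2i (arcF e p b)).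

Lemma sum_cB p : \sum_b cB p b =
  (2 * (deg e p)%:Z - 1) * ((indegF e p)%:Z + (tie p)%:Z - (outdegF e p)%:Z).
Proof.
by rewrite -mulr_sumr sumrB big_split /= /outdegF /indegF /tie !card_sum_int.
Qed.

Lemma deg_pos p q : e p q -> (0 < deg e p)%N.
Proof. by move=> epq; apply/card_gt0P; exists q; rewrite inE. Qed.

Lemma row_dec p q : p != q -> e p q ->
  Gf e (tg e p q) p q +
  (2 * (deg e p)%:Z - 1) * ((indegF e p)%:Z + (tie p)%:Z - (outdegF e p)%:Z)
  - cB p q <= \sum_b Gf e (tg e p q) p b.
Proof.
move=> pq epq.
have := row_lb (f := Gf e (tg e p q) p) (c := cB p) pq.
have hpp : cB p p = 0 by rewrite /cB /arcF hie /= subrr mulr0.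
have hGpp : Gf e (tg e p q) p p = 0.
  have [_ hiH] := tg_simple pq (conj hse hie).
  by rewrite /Gf /Tn hiH hie subrr.
rewrite hpp hGpp sum_cB.
move=> H; apply: le_trans (H _); first lia.
move=> b bp bq; rewrite /cB /Gf /Tn (tg_pb e pq bq) (deg_tg_out e bp bq) (deg_tg_p e pq) epq.
rewrite /arcF (hse b p); case: (e p b) => /=.
  exact: dec_lb (deg_pos epq).
by rewrite !subrr mulr0.
Qed.

Lemma row_swap p q b : Gf e (tg e p q) q b = Gf e (tg e q p) q b.
Proof. by rewrite /Gf Tn_tgC. Qed.

Lemma Gf_swap p q : q != p -> Gf e (tg e q p) q p = Gf e (tg e p q) p q.
Proof.
move=> qp; have [hsH _] := tg_simple qp (conj hse hie).
by rewrite /Gf (Tn_sym hsH q p) (Tn_tgC e q p) (Tn_sym hse q p).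
Qed.

Lemma lin1 (A B G : int) : G <= A -> G <= B -> 0 < G -> 0 < 2 * A + 2 * B - 2 * G.
Proof. lia. Qed.

Lemma caseA p q : p != q -> ~~ e p q -> (indegF e p <= outdegF e p)%N ->
  (indegF e q <= outdegF e q)%N -> deg e p != deg e q ->
  (cM2 e < cM2 (tg e p q))%N.
Proof.
move=> pq epq hp hq dpq.
have sH := tg_simple pq (conj hse hie).
have qp : q != p by rewrite eq_sym.
have eqp : ~~ e q p by rewrite hse.
suff : (2 * cM2 e)%N%:Z < (2 * cM2 (tg e p q))%N%:Z by lia.
rewrite (S_eq sH) (S_eq (conj hse hie)) -subr_gt0 (diff_tg hse hie pq).
have Rp := row_inc hse hie pq epq hp.
have Rq := row_inc hse hie qp eqp hq.
under [X in _ < _ + 2 * X - _]eq_bigr => b _ do rewrite row_swap.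
rewrite (Gf_swap qp) in Rq.
have hG : 0 < Gf e (tg e p q) p q.
  rewrite /Gf /Tn (tg_pq e) (negbTE epq) /= (deg_tg_p e pq) (negbTE epq).
  rewrite (deg_tgC e p q q) (deg_tg_p e qp) (negbTE eqp) /natdist -!mulnn.
  case: (ltngtP (deg e p) (deg e q)) dpq => h // _.
  + have := sqle h; nia.
  + have := sqle h; nia.
exact: lin1 Rp Rq hG.
Qed.

End Main2.

Section Main3.
Variables (n : nat) (e : rel 'I_n).
Hypothesis hse : symmetric e.
Hypothesis hie : irreflexive e.

Lemma lin2 (A B G Cp Cq c1 c2 : int) : G + Cp - c1 <= A -> G + Cq - c2 <= B ->
  0 < 2 * G + 2 * (Cp - c1) + 2 * (Cq - c2) -> 0 < 2 * A + 2 * B - 2 * G.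
Proof. lia. Qed.

Lemma caseB p q : p != q -> e p q -> (outdegF e p < indegF e p)%N ->
  (indegF e q <= outdegF e q)%N -> (deg e q <= deg e p)%N ->
  (forall w, arcF e w p -> e q w) -> (cM2 e < cM2 (tg e p q))%N.
Proof.
move=> pq epq hY hX hd hB.
have sH := tg_simple pq (conj hse hie).
have qp : q != p by rewrite eq_sym.
have eqp : e q p by rewrite hse.
suff : (2 * cM2 e)%N%:Z < (2 * cM2 (tg e p q))%N%:Z by lia.
rewrite (S_eq sH) (S_eq (conj hse hie)) -subr_gt0 (diff_tg hse hie pq).
have Rp := row_dec hse hie pq epq.
have Rq := row_dec hse hie qp eqp.
under [X in _ < _ + 2 * X - _]eq_bigr => b _ do rewrite row_swap.
rewrite (Gf_swap hse hie qp) in Rq.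
apply: (lin2 Rp Rq).
have hG : Gf e (tg e p q) p q =
    - ((deg e p)%:Z * (deg e p)%:Z - (deg e q)%:Z * (deg e q)%:Z).
  rewrite /Gf /Tn (tg_pq e) epq /= /natdist -!mulnn.
  have := sqle hd; nia.
have hin : (indegF e p + (deg e q < deg e p) <= indegF e q)%N.
  rewrite /indegF; case: ltnP => h /=.
    have -> : (#|[set w | arcF e w p]| + 1 = #|p |: [set w | arcF e w p]|)%N.
      by rewrite cardsU1 inE /arcF hie addnC.
    apply: subset_leq_card; apply/subsetP => w; rewrite !inE.
    case/orP => [/eqP ->|hw]; first by rewrite /arcF epq h.
    move: (hB w hw) (hw); rewrite /arcF => hqw /andP[_ h2].
    by rewrite hse hqw /=; apply: leq_ltn_trans h2.
  rewrite addn0; apply: subset_leq_card; apply/subsetP => w; rewrite !inE.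
  move=> hw; move: (hB w hw) (hw); rewrite /arcF => hqw /andP[_ h2].
  by rewrite hse hqw /=; apply: leq_ltn_trans h2.
have htie : deg e q = deg e p -> (1 <= tie e q)%N.
  move=> h; apply/card_gt0P; exists p; by rewrite inE hse epq h eqxx.
have dp := deg_part hse p. have dq := deg_part hse q.
rewrite hG /cB /arcF epq eqp /=.
move: hin htie hY hX; case: (ltngtP (deg e q) (deg e p)) hd => // h _ hin htie hY hX.
- rewrite /b2i /=.
  have := @arith1 (deg e p) (deg e q) (indegF e p) (outdegF e p) (tie e p)
            (indegF e q) (outdegF e q) (tie e q).
  rewrite -/(tie e p) -/(tie e q) in dp dq.
  lia.
- rewrite /b2i /=.
  have := @arith0 (deg e p) (indegF e p) (outdegF e p) (tie e p)
            (indegF e q) (outdegF e q) (tie e q).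
  have := htie h.
  rewrite -/(tie e p) -/(tie e q) in dp dq.
  rewrite h in dq *.
  lia.
Qed.

End Main3.

Local Close Scope ring_scope.

Theorem claim3 (n : nat) (e : rel 'I_n) :
  simple_graph e ->
  (forall h : rel 'I_n, simple_graph h -> cM2 h <= cM2 e) ->
  forall v : 'I_n, v \in Yset e -> inNbF e v \subset Xset e ->
  forall u : 'I_n, u \in Xset e -> e u v -> arcF e u v.
Proof.
move=> [hs hi] hmax v hv hsub u hu euv.
rewrite /arcF euv /=.
case: (ltnP (deg e v) (deg e u)) => // hle.
rewrite inE in hv; rewrite inE in hu.
case: (boolP [exists w, arcF e w v && ~~ e u w]).
- case/existsP => w /andP[awv euw].
  have wX : w \in Xset e by apply: (subsetP hsub); rewrite inE.
  rewrite inE in wX.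
  have dvw : deg e v < deg e w by case/andP: awv.
  have uw : u != w.
    by apply/eqP => uw; move: dvw; rewrite -uw ltnNge hle.
  have dne : deg e u != deg e w.
    by apply/eqP => h; move: dvw; rewrite -h ltnNge hle.
  have := caseA hs hi uw euw hu wX dne.
  have := hmax _ (tg_simple uw (conj hs hi)).
  lia.
- move=> /existsPn hB.
  have vu : v != u by apply/eqP => vu; move: euv; rewrite vu hi.
  have evu : e v u by rewrite hs.
  have hB' : forall w, arcF e w v -> e u w.
    by move=> w aw; move: (hB w); rewrite aw /= negbK.
  have := caseB hs hi vu evu hv hu hle hB'.
  have := hmax _ (tg_simple vu (conj hs hi)).
  lia.
Qed.
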